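(* Let $L:\mathbb{R}^d\to\mathbb{R}^{\mathcal{Y}}_+$ be a polyhedral loss. Then $L$ is minimizable and elicits a property $\Gamma:=\mathrm{prop}[L]$. Moreover, the range of $\Gamma$, namely $\{\Gamma(p)\subseteq\mathbb{R}^d:p\in\Delta_{\mathcal{Y}}\}$, is a finite set of closed polyhedra.
   Context: $\mathcal{Y}$ is a finite label set, $\Delta_{\mathcal{Y}}$ the probability simplex, $\mathbb{R}^{\mathcal{Y}}_+$ the nonnegative orthant. $L:\mathbb{R}^d\to\mathbb{R}^{\mathcal{Y}}_+$ is polyhedral if each $u\mapsto L(u)_y$ is a pointwise maximum of finitely many affine functions. $L$ is minimizable if $\inf_u\langle p,L(u)\rangle$ is attained for every $p\in\Delta_{\mathcal{Y}}$; in that case it elicits $\mathrm{prop}[L](p)=\arg\min_u\langle p,L(u)\rangle$. *)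

(* Defs.v *)
From HB Require Import structures.
From mathcomp Require Import all_boot all_order all_algebra.
From mathcomp Require Import boolp classical_sets functions cardinality reals.
Set Implicit Arguments. Unset Strict Implicit. Unset Printing Implicit Defensive.
Import Order.TTheory GRing.Theory Num.Theory.
Local Open Scope ring_scope.
Local Open Scope classical_set_scope.

Section Defs.
Variables (R : realType) (d : nat) (Y : finType).

Definition dotv (a u : 'rV[R]_d) : R := \sum_(i < d) a 0 i * u 0 i.

Definition affine_eval (ab : 'rV[R]_d * R) (u : 'rV[R]_d) : R :=
  dotv ab.1 u + ab.2.

Definition max_affine (f : 'rV[R]_d -> R) : Prop :=
  exists (ab0 : 'rV[R]_d * R) (s : seq ('rV[R]_d * R)),
    forall u, f u = \big[Num.max/affine_eval ab0 u]_(ab <- s) affine_eval ab u.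

Definition nonneg_loss (L : 'rV[R]_d -> Y -> R) : Prop :=
  forall u y, 0 <= L u y.

Definition polyhedral (L : 'rV[R]_d -> Y -> R) : Prop :=
  nonneg_loss L /\ forall y, max_affine (fun u => L u y).

Definition simplex : set (Y -> R) :=
  [set p | (forall y, 0 <= p y) /\ \sum_(y : Y) p y = 1].

Definition exp_loss (L : 'rV[R]_d -> Y -> R) (p : Y -> R) (u : 'rV[R]_d) : R :=
  \sum_(y : Y) p y * L u y.

Definition minimizable (L : 'rV[R]_d -> Y -> R) : Prop :=
  forall p, simplex p ->
    exists u, forall u', exp_loss L p u <= exp_loss L p u'.

Definition prop (L : 'rV[R]_d -> Y -> R) (p : Y -> R) : set 'rV[R]_d :=
  [set u | forall u', exp_loss L p u <= exp_loss L p u'].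

Definition polyhedron (P : set 'rV[R]_d) : Prop :=
  exists s : seq ('rV[R]_d * R),
    P = [set u | forall ab, ab \in s -> dotv ab.1 u <= ab.2].

End Defs.
Arguments simplex {R Y}.

(* Main.v *)
Require Import Defs.
From HB Require Import structures.
From mathcomp Require Import all_boot all_order all_algebra.
From mathcomp Require Import boolp classical_sets functions cardinality reals.
From mathcomp Require Import zify ring lra.
Import Order.TTheory GRing.Theory Num.Theory.
Local Open Scope ring_scope.
Local Open Scope classical_set_scope.

Section Basic.
Variables (R : realType) (d : nat).

Lemma dotv_lin (a u e : 'rV[R]_d) (t : R) :
  dotv a (u + t *: e) = dotv a u + t * dotv a e.
Proof.
rewrite /dotv mulr_sumr -big_split /=; apply: eq_bigr => i _.
by rewrite !mxE mulrDr mulrCA.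
Qed.

Lemma dotv_sub (a u v : 'rV[R]_d) : dotv a (v - u) = dotv a v - dotv a u.
Proof.
rewrite /dotv -sumrB; apply: eq_bigr => i _.
by rewrite !mxE mulrBr.
Qed.

Lemma dotv_suml (Y : finType) (p : Y -> R) (a : Y -> 'rV[R]_d) u :
  dotv (\sum_y p y *: a y) u = \sum_y p y * dotv (a y) u.
Proof.
rewrite /dotv; under eq_bigr => i _ do rewrite summxE big_distrl /=.
rewrite exchange_big /=; apply: eq_bigr => y _.
rewrite mulr_sumr; apply: eq_bigr => i _; by rewrite !mxE mulrA.
Qed.

End Basic.

Section Ray.
Variable R : realType.

Lemma small_step (T : eqType) (r : seq T) (c s : T -> R) :
  (forall x, x \in r -> 0 < c x) ->
  exists t : R, 0 < t /\ forall x, x \in r -> 0 <= c x + t * s x.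
Proof.
elim: r => [|x r IH] H.
  by exists 1; split.
have [t [t0 Ht]] : exists t : R, 0 < t /\ forall x, x \in r -> 0 <= c x + t * s x.
  by apply: IH => z zr; apply: H; rewrite inE zr orbT.
have cx : 0 < c x by apply: H; rewrite inE eqxx.
pose t0' := if s x < 0 then c x / (- s x) else 1.
have t0'p : 0 < t0'.
  rewrite /t0'; case: ifP => // sx; apply: divr_gt0 => //; by rewrite oppr_gt0.
have Hx : forall t', 0 <= t' -> t' <= t0' -> 0 <= c x + t' * s x.
  move=> t' t'0 t't; rewrite /t0' in t't; case: ifP t't => sx t't.
    have : t' * (- s x) <= c x by rewrite -ler_pdivlMr ?oppr_gt0.
    rewrite mulrN; lra.
  have : 0 <= s x by rewrite leNgt sx.
  move=> sx0; have := mulr_ge0 t'0 sx0; lra.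
exists (Num.min t t0'); split; first by rewrite lt_min t0 t0'p.
have mp : 0 <= Num.min t t0' by rewrite le_min (ltW t0) (ltW t0'p).
move=> z; rewrite inE => /orP [/eqP -> | zr].
  by apply: Hx => //; rewrite ge_min lexx orbT.
have cz : 0 < c z by apply: H; rewrite inE zr orbT.
have := Ht z zr; case: (leP 0 (s z)) => sz Hz.
  have := mulr_ge0 mp sz; lra.
have : Num.min t t0' * s z >= t * s z.
  by rewrite ler_wnM2r ?ge_min ?lexx // ltW.
lra.
Qed.

Lemma ray_step (T : eqType) (r : seq T) (c s : T -> R) :
  (forall x, x \in r -> 0 <= c x) -> (exists2 x, x \in r & s x < 0) ->
  exists t : R, 0 <= t /\ (forall x, x \in r -> 0 <= c x + t * s x) /\
     exists2 x, x \in r & c x + t * s x = 0.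
Proof.
elim: r => [|x r IH] H; first by case.
move=> Hex.
have cx : 0 <= c x by apply: H; rewrite inE eqxx.
have Hr : forall z, z \in r -> 0 <= c z by move=> z zr; apply: H; rewrite inE zr orbT.
pose tx := c x / (- s x).
have Hx0 : s x < 0 -> 0 <= tx /\ c x + tx * s x = 0.
  move=> sx; split; first by apply: divr_ge0 => //; rewrite oppr_ge0 ltW.
  have sx0 : s x != 0 by rewrite lt_eqF.
  by rewrite /tx; field.
have Hxt : s x < 0 -> forall t, 0 <= t -> t <= tx -> 0 <= c x + t * s x.
  move=> sx t t0 ttx.
  have : t * (- s x) <= c x by rewrite -ler_pdivlMr ?oppr_gt0.
  rewrite mulrN; lra.
case: (boolP (has (fun z => s z < 0) r)) => [/hasP [z zr sz] | /hasPn hn].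
  have [t [t0 [Ht [w wr Hw]]]] := IH Hr (ex_intro2 _ _ z zr sz).
  case: (ltP (s x) 0) => sx.
    have [tx0 Htx] := Hx0 sx.
    case: (leP t tx) => ttx.
      exists t; split => //; split; last by exists w => //; rewrite inE wr orbT.
      move=> y; rewrite inE => /orP [/eqP -> | yr]; [exact: Hxt | exact: Ht].
    exists tx; split => //; split; last by exists x => //; rewrite inE eqxx.
    move=> y; rewrite inE => /orP [/eqP -> | yr]; first by rewrite Htx.
    have := Ht y yr; have := Hr y yr; case: (leP 0 (s y)) => sy.
      have := mulr_ge0 tx0 sy; lra.
    have : tx * s y >= t * s y by rewrite ler_wnM2r // ltW.
    lra.
  exists t; split => //; split; last by exists w => //; rewrite inE wr orbT.
  move=> y; rewrite inE => /orP [/eqP -> | yr]; last exact: Ht.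
  have := mulr_ge0 t0 sx; lra.
have sx : s x < 0.
  case: Hex => z; rewrite inE => /orP [/eqP -> // | zr] sz.
  by have := hn z zr; rewrite sz.
have [tx0 Htx] := Hx0 sx.
exists tx; split => //; split; last by exists x => //; rewrite inE eqxx.
move=> y; rewrite inE => /orP [/eqP -> | yr]; first by rewrite Htx.
have := hn y yr; rewrite -leNgt => sy.
have := mulr_ge0 tx0 sy; have := Hr y yr; lra.
Qed.
End Ray.

Section SeqMin.
Variable R : realType.
Lemma seq_min (T : eqType) (r : seq T) (F : T -> R) (P : T -> Prop) :
  (exists x, x \in r /\ P x) ->
  exists x, [/\ x \in r, P x & forall y, y \in r -> P y -> F x <= F y].
Proof.
elim: r => [|z r IH]; first by case=> x [].
move=> Hex.
case: (pselect (exists x, x \in r /\ P x)) => [/IH [x [xr Px Hx]] | hn].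
  case: (pselect (P z)) => Pz.
    case: (leP (F z) (F x)) => hz.
      exists z; split => //; first by rewrite inE eqxx.
      move=> y; rewrite inE => /orP [/eqP -> // | yr] Py.
      exact: le_trans hz (Hx y yr Py).
    exists x; split => //; first by rewrite inE xr orbT.
    move=> y; rewrite inE => /orP [/eqP -> // | yr] Py; last exact: Hx.
    exact: ltW.
  exists x; split => //; first by rewrite inE xr orbT.
  move=> y; rewrite inE => /orP [/eqP -> // | yr] Py; last exact: Hx.
have Pz : P z.
  case: Hex => x []; rewrite inE => /orP [/eqP -> // | xr] Px.
  by exfalso; apply: hn; exists x.
exists z; split => //; first by rewrite inE eqxx.
move=> y; rewrite inE => /orP [/eqP -> // | yr] Py.
by exfalso; apply: hn; exists y.
Qed.

Lemma bigmax_ub (T : eqType) (F : T -> R) (x0 : T) (s : seq T) x :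
  x \in x0 :: s -> F x <= \big[Num.max/F x0]_(z <- s) F z.
Proof.
elim: s x => [|z s IH] x; first by rewrite inE => /eqP ->; rewrite big_nil.
rewrite big_cons !inE le_max => /or3P [/eqP -> | /eqP -> | xs].
- by rewrite IH ?orbT // inE eqxx.
- by rewrite lexx.
- by rewrite IH ?orbT // inE xs orbT.
Qed.

Lemma bigmax_att (T : eqType) (F : T -> R) (x0 : T) (s : seq T) :
  exists2 x, x \in x0 :: s & \big[Num.max/F x0]_(z <- s) F z = F x.
Proof.
elim: s => [|z s [x xs IH]]; first by exists x0; rewrite ?big_nil ?inE.
rewrite big_cons IH; case: (leP (F z) (F x)) => h.
  exists x => //; move: xs; rewrite !inE.
  by case/orP => ->; rewrite ?orbT.
exists z => //; by rewrite !inE eqxx orbT.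
Qed.
End SeqMin.

Section Main.
Variables (R : realType) (d : nat) (Y I : finType).
Variables (a : Y -> I -> 'rV[R]_d) (b : Y -> I -> R) (L : 'rV[R]_d -> Y -> R).
Definition gg y i u := dotv (a y i) u + b y i.
Hypothesis HL0 : forall u y, 0 <= L u y.
Hypothesis HL1 : forall u y i, gg y i u <= L u y.
Hypothesis HL2 : forall u y, exists i, gg y i u = L u y.

Definition act (u : 'rV[R]_d) : {ffun Y * I -> bool} :=
  [ffun x => gg x.1 x.2 u == L u x.1].

Variable p : Y -> R.
Hypothesis Hp : forall y, 0 <= p y.

Local Notation f := (exp_loss L p).

Definition Vsp u e := forall y i j, act u (y, i) -> act u (y, j) ->
  dotv (a y i) e = dotv (a y j) e.
Definition stuck u := forall e, Vsp u e ->
  (forall y i j, dotv (a y i) e = dotv (a y j) e) /\ f (u + e) = f u.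
Definition DD (k : Y -> I) e := \sum_y p y * dotv (a y (k y)) e.

Lemma gg_lin y i u e t : gg y i (u + t *: e) = gg y i u + t * dotv (a y i) e.
Proof. by rewrite /gg dotv_lin; ring. Qed.

Lemma gg_sub y i u v : dotv (a y i) (v - u) = gg y i v - gg y i u.
Proof. by rewrite dotv_sub /gg; ring. Qed.

Lemma actE u y i : act u (y, i) = (gg y i u == L u y).
Proof. by rewrite /act ffunE. Qed.

Lemma f_ge0 u : 0 <= f u.
Proof. by apply: sumr_ge0 => y _; apply: mulr_ge0. Qed.

Lemma exist_k u : exists k : Y -> I, forall y, gg y (k y) u = L u y.
Proof. have [k Hk] := choice (HL2 u); by exists k. Qed.

Lemma active_all w (k : Y -> I) :
  (forall y i, gg y i w <= gg y (k y) w) -> forall y, L w y = gg y (k y) w.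
Proof.
move=> H y; apply/eqP; rewrite eq_le HL1 andbT.
by have [j <-] := HL2 w y; apply: H.
Qed.

Lemma f_shift u (k : Y -> I) e t :
  (forall y, gg y (k y) u = L u y) ->
  (forall y i, gg y i (u + t *: e) <= gg y (k y) (u + t *: e)) ->
  f (u + t *: e) = f u + t * DD k e.
Proof.
move=> Hk H; have H2 := @active_all _ _ H.
rewrite /exp_loss /DD mulr_sumr -big_split /=; apply: eq_bigr => y _.
by rewrite H2 -Hk gg_lin; ring.
Qed.

Lemma unbounded u (k : Y -> I) e :
  (forall y, gg y (k y) u = L u y) -> DD k e < 0 ->
  exists y i, dotv (a y (k y)) e - dotv (a y i) e < 0.
Proof.
move=> Hk De; apply: contrapT => hn.
have hs : forall y i, 0 <= dotv (a y (k y)) e - dotv (a y i) e.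
  move=> y i; rewrite leNgt; apply/negP => h; apply: hn; by exists y, i.
pose t := (f u + 1) / (- DD k e).
have t0 : 0 <= t by apply: divr_ge0; [have := f_ge0 u; lra | lra].
have := @f_shift u k e t Hk.
have -> : f u + t * DD k e = -1.
  by rewrite /t; field; lra.
move=> H; have := f_ge0 (u + t *: e); rewrite H.
  lra.
move=> y i; rewrite !gg_lin.
have := HL1 u y i; rewrite -Hk => h1.
have := mulr_ge0 t0 (hs y i); lra.
Qed.


Lemma key u v : (forall w, f u <= f w) -> act v = act u -> forall w, f v <= f w.
Proof.
move=> Hu Huv.
have [k Hk] := exist_k u.
have Hkv : forall y, gg y (k y) v = L v y.
  move=> y; apply/eqP; rewrite -actE Huv actE; exact/eqP.
pose e := v - u.
have ve : v = u + 1 *: e by rewrite scale1r /e addrC subrK.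
have fv : f v = f u + 1 * DD k e.
  rewrite {1}ve; apply: f_shift => // y i; rewrite -ve Hkv; exact: HL1.
pose r := [seq x <- enum {: Y * I} | ~~ act u x].
pose c := fun x : Y * I => gg x.1 (k x.1) u - gg x.1 x.2 u.
pose s := fun x : Y * I => - (dotv (a x.1 (k x.1)) e - dotv (a x.1 x.2) e).
have [t [t0 Ht]] : exists t : R, 0 < t /\ forall x, x \in r -> 0 <= c x + t * s x.
  apply: small_step => -[y i]; rewrite mem_filter actE => /andP [hn _].
  rewrite /c /= Hk; have := HL1 u y i; rewrite le_eqVlt (negbTE hn) /=.
  lra.
have fw : f (u + (- t) *: e) = f u + (- t) * DD k e.
  apply: f_shift => // y i; rewrite !gg_lin.
  case: (boolP (act u (y, i))) => hact.
    have hv : act v (y, i) by rewrite Huv.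
    move: hact hv; rewrite !actE => /eqP h1 /eqP h2.
    have -> : dotv (a y i) e = dotv (a y (k y)) e.
      by rewrite /e !gg_sub h1 h2 Hk Hkv.
    by rewrite h1 Hk.
  have xr : (y, i) \in r by rewrite mem_filter hact mem_enum.
  have := Ht _ xr; rewrite /c /s /=; lra.
have := Hu (u + (- t) *: e); rewrite fw => h.
have De : DD k e <= 0.
  have : 0 <= - t * DD k e by lra.
  rewrite mulNr oppr_ge0 pmulr_rle0 //.
move=> w; rewrite fv; have := Hu w; lra.
Qed.

Lemma stuck_eq u v : stuck u -> act u = act v -> f v = f u.
Proof.
move=> Hs Huv; pose e := v - u.
have ve : v = u + e by rewrite /e addrC subrK.
have Ve : Vsp u e.
  move=> y i j hi hj.
  have hi' : act v (y, i) by rewrite -Huv.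
  have hj' : act v (y, j) by rewrite -Huv.
  move: hi hj hi' hj'; rewrite !actE => /eqP h1 /eqP h2 /eqP h3 /eqP h4.
  by rewrite /e !gg_sub h1 h2 h3 h4.
by rewrite ve; case: (Hs e Ve).
Qed.

Definition aset u : {set Y * I} := finset (fun x => act u x).
Definition improves u w := aset u \proper aset w /\ f w <= f u.

Lemma improve u (k : Y -> I) e :
  (forall y, gg y (k y) u = L u y) -> Vsp u e -> DD k e <= 0 ->
  (exists y i, dotv (a y (k y)) e - dotv (a y i) e < 0) ->
  exists w, improves u w.
Proof.
move=> Hk Ve De [y0 [i0 hneg]].
have actk : forall y, act u (y, k y) by move=> y; rewrite actE Hk.
have slope0 : forall y i, act u (y, i) -> dotv (a y i) e = dotv (a y (k y)) e.
  by move=> y i h; apply: Ve.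
pose r := [seq x <- enum {: Y * I} | ~~ act u x].
pose c := fun x : Y * I => gg x.1 (k x.1) u - gg x.1 x.2 u.
pose s := fun x : Y * I => dotv (a x.1 (k x.1)) e - dotv (a x.1 x.2) e.
have [t [t0 [Ht [[y1 i1] x1r Hx1]]]] :
    exists t : R, 0 <= t /\ (forall x, x \in r -> 0 <= c x + t * s x) /\
     exists2 x, x \in r & c x + t * s x = 0.
  apply: ray_step.
    move=> [y i] _; rewrite /c /= Hk; have := HL1 u y i; lra.
  exists (y0, i0) => //; rewrite mem_filter mem_enum andbT.
  apply/negP => h; move: hneg; rewrite (slope0 _ _ h); lra.
pose w := u + t *: e.
have Hle : forall y i, gg y i w <= gg y (k y) w.
  move=> y i; rewrite /w !gg_lin.
  case: (boolP (act u (y, i))) => hact.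
    rewrite (slope0 _ _ hact); move: hact; rewrite actE => /eqP ->; rewrite Hk.
    by [].
  have xr : (y, i) \in r by rewrite mem_filter hact mem_enum.
  have := Ht _ xr; rewrite /c /s /=; lra.
have Lw := @active_all _ _ Hle.
exists w; split.
  apply/properP; split.
    apply/fintype.subsetP => -[y i]; rewrite !inE !actE => /eqP h.
    rewrite Lw; apply/eqP; rewrite /w !gg_lin.
    by rewrite (slope0 y i) ?actE ?h ?Hk.
  exists (y1, i1).
    rewrite inE actE Lw; apply/eqP; move: Hx1; rewrite /c /s /w !gg_lin /=; lra.
  by move: x1r; rewrite mem_filter inE => /andP [].
rewrite /w (@f_shift u k e t Hk Hle).
have : t * DD k e <= 0 by rewrite mulr_ge0_le0.
lra.
Qed.

Arguments improve {u k e}.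
Arguments unbounded {u k e}.

Lemma dotvN (c e : 'rV[R]_d) : dotv c (- e) = - dotv c e.
Proof. by rewrite /dotv -sumrN; apply: eq_bigr => i _; rewrite !mxE mulrN. Qed.

Lemma not_improve_stuck u : ~ (exists w, improves u w) -> stuck u.
Proof.
move=> hn e Ve; have [k Hk] := exist_k u.
have VeN : Vsp u (- e).
  by move=> y i j hi hj; rewrite !dotvN (Ve y i j hi hj).
have DN : DD k (- e) = - DD k e.
  by rewrite /DD -sumrN; apply: eq_bigr => y _; rewrite dotvN mulrN.
have D0 : DD k e = 0.
  case: (ltrgtP (DD k e) 0) => h //; exfalso; apply: hn.
    exact: (improve Hk Ve (ltW h) (unbounded Hk h)).
  have h' : DD k (- e) < 0 by rewrite DN oppr_lt0.
  exact: (improve Hk VeN (ltW h') (unbounded Hk h')).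
have S0 : forall y i, dotv (a y (k y)) e - dotv (a y i) e = 0.
  move=> y i; case: (ltrgtP (dotv (a y (k y)) e - dotv (a y i) e) 0) => h //;
    exfalso; apply: hn.
    by apply: (improve Hk Ve) => //; [rewrite D0 | exists y, i].
  apply: (improve Hk VeN) => //; first by rewrite DN D0 oppr0.
  by exists y, i; rewrite !dotvN; lra.
split.
  by move=> y i j; have := S0 y i; have := S0 y j; lra.
have := @f_shift u k e 1 Hk; rewrite scale1r D0 mulr0 addr0; apply.
move=> y i.
have := @gg_lin y i u e 1; have := @gg_lin y (k y) u e 1; rewrite scale1r.
have := HL1 u y i; have := S0 y i; rewrite -Hk; lra.
Qed.

Lemma reach n u : (#|{: Y * I}| - #|aset u| <= n)%N ->
  exists w, stuck w /\ f w <= f u.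
Proof.
elim: n u => [|n IH] u hn; case: (pselect (stuck u)) => hs;
  try by exists u; split.
  have [w [hp hw]] : exists w, improves u w.
    by apply: contrapT => h; apply: hs; apply: not_improve_stuck.
  have := proper_card hp; move: hn; rewrite -cardsT; have := subset_leq_card (finset.subsetT (aset w)); move=> h1 h3 h2; exfalso; move: h3; rewrite leqn0 subn_eq0 => h3; have := leq_trans h2 (leq_trans h1 h3); by rewrite ltnn.
have [w [hp hw]] : exists w, improves u w.
  by apply: contrapT => h; apply: hs; apply: not_improve_stuck.
have h2 := proper_card hp.
have hw' : (#|{: Y * I}| - #|aset w| <= n)%N.
  apply: leq_trans (leq_sub2l _ h2) _.
  by rewrite subnS -subn1 leq_subLR add1n.
have [w' [s' h']] := IH w hw'.
by exists w'; split => //; apply: le_trans hw.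
Qed.

Lemma exists_min : exists u, forall w, f u <= f w.
Proof.
have reach' : forall u, exists w, stuck w /\ f w <= f u.
  move=> u; apply: (@reach #|{: Y * I}|); lia.
pose P := fun A : {ffun Y * I -> bool} => exists v, stuck v /\ act v = A.
have : forall A, exists u, P A -> stuck u /\ act u = A.
  move=> A; case: (pselect (P A)) => [[v hv] | np]; first by exists v.
  by exists 0.
move=> /choice [h Hh].
have [u0 [hs0 _]] := reach' 0.
have [A [_ PA HA]] := @seq_min R _ (enum {: {ffun Y * I -> bool}}) (fun A => f (h A)) P
  (ex_intro _ (act u0) (conj (mem_enum _ _) (ex_intro _ u0 (conj hs0 erefl)))).
exists (h A) => w.
have [w' [hs' hw']] := reach' w.
have Pw' : P (act w') by exists w'.
have := HA (act w') (mem_enum _ _) Pw'.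
have [hsA hactA] := Hh _ Pw'.
rewrite -(@stuck_eq _ _ hsA hactA) => h1.
exact: le_trans h1 hw'.
Qed.


Definition SG : {set {ffun Y * I -> bool}} :=
  finset (fun A => `[< exists v, prop L p v /\ act v = A >]).

Lemma prop_act : prop L p = [set u | act u \in SG].
Proof.
apply/seteqP; split => u /=.
  by move=> hu; rewrite inE; apply/asboolP; exists u.
rewrite inE => /asboolP [v [hv hva]].
exact: (@key v u hv (esym hva)).
Qed.

Lemma prop_poly : polyhedron (prop L p).
Proof.
have [us Hus] := exists_min.
pose m := f us.
exists [seq (\sum_y p y *: a y (sg y), m - \sum_y p y * b y (sg y)) |
         sg : {ffun Y -> I} <- enum {: {ffun Y -> I}}].
apply/seteqP; split => u /=.
  move=> hu ab /mapP [sg _ ->] /=.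
  rewrite dotv_suml.
  have : \sum_y p y * gg y (sg y) u <= f u.
    by apply: ler_sum => y _; apply: ler_wpM2l => //; apply: HL1.
  have -> : \sum_y p y * gg y (sg y) u =
      \sum_y p y * dotv (a y (sg y)) u + \sum_y p y * b y (sg y).
    by rewrite -big_split /=; apply: eq_bigr => y _; rewrite /gg; ring.
  have := hu us; rewrite -/m; lra.
move=> H w.
apply: le_trans (Hus w).
have [k Hk] := exist_k u.
have := H _ (map_f (fun sg : {ffun Y -> I} =>
   (\sum_y p y *: a y (sg y), m - \sum_y p y * b y (sg y)))
   (mem_enum _ [ffun y => k y])).
rewrite /= dotv_suml.
have -> : f u = \sum_y p y * dotv (a y (k y)) u + \sum_y p y * b y (k y).
  rewrite -big_split /=; apply: eq_bigr => y _; rewrite -Hk /gg; ring.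
under eq_bigr => y _ do rewrite ffunE.
rewrite (eq_bigr (fun y => p y * dotv (a y (k y)) u)); last by move=> y _; rewrite ffunE.
rewrite -/m; lra.
Qed.

End Main.

Arguments gg {R d Y I} a b y i u.
Arguments act {R d Y I} a b L u.
Arguments SG {R d Y I} a b L p.
Arguments exists_min {R d Y I a b L} HL0 HL1 HL2 {p} Hp.
Arguments prop_poly {R d Y I a b L} HL0 HL1 HL2 {p} Hp.
Arguments prop_act {R d Y I a b L} HL1 HL2 p.

Lemma nth_in_cons (T : eqType) (x0 : T) (s : seq T) i : nth x0 (x0 :: s) i \in x0 :: s.
Proof.
case: (ltnP i (size (x0 :: s))) => h; first exact: mem_nth.
by rewrite nth_default // mem_head.
Qed.

Theorem lemma2 (R : realType) (d : nat) (Y : finType)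
    (L : 'rV[R]_d -> Y -> R) :
  polyhedral L ->
  minimizable L /\
  finite_set [set prop L p | p in simplex] /\
  (forall p, simplex p -> polyhedron (prop L p)).
Proof.
case=> HL0 Hmax.
have : forall y, exists z : ('rV[R]_d * R) * seq ('rV[R]_d * R),
    forall u, L u y = \big[Num.max/affine_eval z.1 u]_(ab <- z.2) affine_eval ab u.
  by move=> y; have [ab0 [s H]] := Hmax y; exists (ab0, s).
move=> /choice [z Hz].
pose M := (\max_y size (z y).2).+1.
pose pc := fun y (i : 'I_M) => nth (z y).1 ((z y).1 :: (z y).2) i.
pose a := fun y i => (pc y i).1.
pose b := fun y i => (pc y i).2.
have HL1 : forall u y i, gg a b y i u <= L u y.
  move=> u y i; rewrite Hz.
  have H := @bigmax_ub R _ (fun ab => affine_eval ab u) (z y).1 (z y).2 (pc y i) (nth_in_cons _ _ _ _).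
  exact H.
have HL2 : forall u y, exists i, gg a b y i u = L u y.
  move=> u y; have [x xs Hx] := @bigmax_att R _ (fun ab => affine_eval ab u) (z y).1 (z y).2.
  have hi : (index x ((z y).1 :: (z y).2) < M)%N.
    apply: (leq_trans (n := size ((z y).1 :: (z y).2))); first by rewrite index_mem.
    by rewrite /M /= ltnS (leq_bigmax y).
  exists (Ordinal hi); rewrite Hz Hx /gg /a /b /pc /= nth_index //.
have Sfin : finite_set [set prop L p | p in simplex].
  apply: (@sub_finite_set _ _
     ((fun S : {set {ffun Y * 'I_M -> bool}} => [set u | act a b L u \in S]) @`
        [set: {set {ffun Y * 'I_M -> bool}}])).
    move=> P [p _ <-]; exists (SG a b L p) => //.
    by rewrite (prop_act HL1 HL2).
  by apply: finite_image; apply: finite_finset.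
split; last split => //.
  by move=> p [Hp _]; apply: (exists_min HL0 HL1 HL2 Hp).
by move=> p [Hp _]; apply: (prop_poly HL0 HL1 HL2 Hp).
Qed.
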